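(* Consider the multiobjective proximal gradient (MPG) algorithm described in the context, applied to the problem $\min_{x\in\mathbb{R}^n} F(x)$ under the standing assumptions (i)–(iii). Then the MPG algorithm is well defined (that is, at any iteration $k$ at which it does not stop, the line search of Step 3 terminates after finitely many trial step sizes, so $x^{k+1}$ is defined), and it stops at iteration $k$ if and only if $x^k$ is a weakly Pareto optimal point of the problem.
   Context: Let $F:\mathbb{R}^n\to(\mathbb{R}\cup\{+\infty\})^m$, $F=(F_1,\ldots,F_m)$, with $F_j=G_j+H_j$ for $j=1,\ldots,m$, where: (i) each $G_j:\mathbb{R}^n\to\mathbb{R}$ is continuously differentiable and convex; (ii) each $H_j:\mathbb{R}^n\to\mathbb{R}\cup\{+\infty\}$ is proper, convex and continuous on its domain $\mathrm{dom}(H_j)$; (iii) $\mathrm{dom}(F):=\{x: F_j(x)<+\infty\ \forall j\}$ is nonempty and closed. For $u,v\in\mathbb{R}^m$, $u\preceq v$ means $u_j\le v_j$ for all $j$, and $u\prec v$ means $u_j<v_j$ for all $j$. A point $\bar x$ is weakly Pareto optimal if there is no $x\in\mathbb{R}^n$ with $F(x)\prec F(\bar x)$. For $x\in\mathrm{dom}(F)$ and $\alpha>0$ define $\psi_x(u):=\max_{j=1,\ldots,m}\big(\nabla G_j(x)^\top(u-x)+H_j(u)-H_j(x)\big)$, $p_\alpha(x):=\arg\min_{u\in\mathbb{R}^n}\psi_x(u)+\frac{1}{2\alpha}\|u-x\|^2$ (unique minimizer), and $\theta_\alpha(x):=\psi_x(p_\alpha(x))+\frac{1}{2\alpha}\|p_\alpha(x)-x\|^2$.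 MPG algorithm. Step 0: choose $x^0\in\mathrm{dom}(F)$, $\alpha>0$, $\gamma\in(0,2/\alpha)$, $0<\tau_1<\tau_2<1$; set $k=0$. Step 1: compute $p^k:=p_\alpha(x^k)$ and $\theta_\alpha(x^k)$. Step 2: if $\theta_\alpha(x^k)=0$, stop. Step 3: set $d^k:=p^k-x^k$, take $j_k^*\in\arg\max_{j}\nabla G_j(x^k)^\top d^k$, set $t=1$. Step 3.1: if $G_{j_k^*}(x^k+td^k)\le G_{j_k^*}(x^k)+t\nabla G_{j_k^*}(x^k)^\top d^k+t\frac{\gamma}{2}\|d^k\|^2$, go to Step 3.2; otherwise replace $t$ by some value in $[\tau_1 t,\tau_2 t]$ and repeat Step 3.1. Step 3.2: if $F(x^k+td^k)\preceq F(x^k)$, set $t_k=t$ and go to Step 4. Step 3.3: replace $t$ by some value in $[\tau_1 t,\tau_2 t]$; if $G_j(x^k+td^k)\le G_j(x^k)+t\nabla G_j(x^k)^\top d^k+t\frac{\gamma}{2}\|d^k\|^2$ for all $j=1,\ldots,m$, set $t_k=t$ and go to Step 4; otherwise repeat Step 3.3. Step 4: $x^{k+1}:=x^k+t_kd^k$, $k\leftarrow k+1$, go to Step 1. *)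

(* Defs.v *)
From mathcomp Require Import all_boot all_order all_algebra.
From mathcomp Require Import all_classical all_reals all_analysis.
Import Order.TTheory GRing.Theory Num.Theory.
Import numFieldNormedType.Exports.
Set Implicit Arguments.
Unset Strict Implicit.
Unset Printing Implicit Defensive.
Local Open Scope ring_scope.
Local Open Scope classical_set_scope.

Definition dotv (R : realType) (n : nat) (u v : 'rV[R]_n) : R :=
  \sum_(i < n) u 0 i * v 0 i.
Definition sqnorm (R : realType) (n : nat) (v : 'rV[R]_n) : R :=
  \sum_(i < n) (v 0 i) ^+ 2.

Definition grad (R : realType) (n : nat) (f : 'rV[R]_n -> R) (x : 'rV[R]_n)
  : 'rV[R]_n := \row_i ('d f x (delta_mx 0 i)).

Definition C1 (R : realType) (n : nat) (f : 'rV[R]_n -> R) : Prop :=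
  (forall x, differentiable f x) /\ continuous (grad f).

Definition convex_fun (R : realType) (n : nat) (f : 'rV[R]_n -> R) : Prop :=
  forall (x y : 'rV[R]_n) (l : R), 0 <= l <= 1 ->
    f (l *: x + (1 - l) *: y) <= l * f x + (1 - l) * f y.

Definition edom (R : realType) (n : nat) (h : 'rV[R]_n -> \bar R) : set 'rV[R]_n :=
  [set x | (h x < +oo)%E].

Definition proper_fun (R : realType) (n : nat) (h : 'rV[R]_n -> \bar R) : Prop :=
  (forall x, h x != -oo%E) /\ edom h !=set0.

Definition convex_efun (R : realType) (n : nat) (h : 'rV[R]_n -> \bar R) : Prop :=
  forall (x y : 'rV[R]_n) (l : R), 0 < l < 1 ->
    (h (l *: x + (1 - l) *: y)%R <= l%:E * h x + (1 - l)%:E * h y)%E.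

Definition Fobj (R : realType) (n m : nat) (G : 'I_m -> 'rV[R]_n -> R)
  (H : 'I_m -> 'rV[R]_n -> \bar R) (j : 'I_m) (x : 'rV[R]_n) : \bar R :=
  ((G j x)%:E + H j x)%E.

Definition domF (R : realType) (n m : nat) (G : 'I_m -> 'rV[R]_n -> R)
  (H : 'I_m -> 'rV[R]_n -> \bar R) : set 'rV[R]_n :=
  [set x | forall j, (Fobj G H j x < +oo)%E].

Definition weak_pareto (R : realType) (n m : nat) (G : 'I_m -> 'rV[R]_n -> R)
  (H : 'I_m -> 'rV[R]_n -> \bar R) (xb : 'rV[R]_n) : Prop :=
  ~ exists x, forall j, (Fobj G H j x < Fobj G H j xb)%E.

Definition psi (R : realType) (n m : nat) (G : 'I_m -> 'rV[R]_n -> R)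
  (H : 'I_m -> 'rV[R]_n -> \bar R) (x u : 'rV[R]_n) : \bar R :=
  (\big[maxe/-oo]_(j < m) ((dotv (grad (G j) x) (u - x)%R)%:E + H j u - H j x))%E.

Definition prox_obj (R : realType) (n m : nat) (G : 'I_m -> 'rV[R]_n -> R)
  (H : 'I_m -> 'rV[R]_n -> \bar R) (alpha : R) (x u : 'rV[R]_n) : \bar R :=
  (psi G H x u + ((2 * alpha)^-1 * sqnorm (u - x)%R)%:E)%E.

Definition is_prox (R : realType) (n m : nat) (G : 'I_m -> 'rV[R]_n -> R)
  (H : 'I_m -> 'rV[R]_n -> \bar R) (alpha : R) (x p : 'rV[R]_n) : Prop :=
  forall u, (prox_obj G H alpha x p <= prox_obj G H alpha x u)%E.

Definition theta (R : realType) (n m : nat) (G : 'I_m -> 'rV[R]_n -> R)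
  (H : 'I_m -> 'rV[R]_n -> \bar R) (alpha : R) (x p : 'rV[R]_n) : \bar R :=
  prox_obj G H alpha x p.

(* trial step sizes of the backtracking: t_0 = 1, t_{i+1} = c_i t_i, where
   c_i in [tau1, tau2] encodes the (arbitrary) choice made at the i-th
   reduction "replace t by some value in [tau1 t, tau2 t]". *)
Fixpoint trial (R : realType) (c : nat -> R) (i : nat) : R :=
  match i with 0 => 1 | i'.+1 => c i' * trial c i' end.

Definition armijo (R : realType) (n m : nat) (G : 'I_m -> 'rV[R]_n -> R)
  (gamma : R) (x d : 'rV[R]_n) (j : 'I_m) (t : R) : Prop :=
  G j (x + t *: d) <= G j x + t * dotv (grad (G j) x) d + t * (gamma / 2) * sqnorm d.

Definition Fdecrease (R : realType) (n m : nat) (G : 'I_m -> 'rV[R]_n -> R)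
  (H : 'I_m -> 'rV[R]_n -> \bar R) (x d : 'rV[R]_n) (t : R) : Prop :=
  forall j, (Fobj G H j (x + t *: d)%R <= Fobj G H j x)%E.

(* The line search of Step 3 (with index j*, direction d, choice sequence c)
   terminates after finitely many trial step sizes, and the new iterate
   x + t_k d lies in dom(F).  i1 is the index at which Step 3.1 exits; then
   either Step 3.2 accepts t_{i1}, or Step 3.3 accepts the first later trial
   step t_{i2} satisfying the test for all j. *)
Definition linesearch_terminates (R : realType) (n m : nat)
  (G : 'I_m -> 'rV[R]_n -> R) (H : 'I_m -> 'rV[R]_n -> \bar R)
  (gamma : R) (x d : 'rV[R]_n) (jstar : 'I_m) (c : nat -> R) : Prop :=
  exists i1 : nat,
    armijo G gamma x d jstar (trial c i1) /\
    (forall i, (i < i1)%N -> ~ armijo G gamma x d jstar (trial c i)) /\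
    ((Fdecrease G H x d (trial c i1) /\ domF G H (x + trial c i1 *: d)) \/
     (~ Fdecrease G H x d (trial c i1) /\
      exists i2 : nat, (i1 < i2)%N /\
        (forall j, armijo G gamma x d j (trial c i2)) /\
        (forall i, (i1 < i < i2)%N -> ~ (forall j, armijo G gamma x d j (trial c i))) /\
        domF G H (x + trial c i2 *: d))).

(* Main.v *)
Require Import Defs.
From mathcomp Require Import all_boot all_order all_algebra.
From mathcomp Require Import all_classical all_reals all_analysis.
From mathcomp Require Import ring lra.
Import Order.TTheory GRing.Theory Num.Theory.
Import numFieldNormedType.Exports.
Local Open Scope ring_scope.
Local Open Scope classical_set_scope.

Section Generic.
Context {R : realType} {n : nat}.
Implicit Types (u v a b x d : 'rV[R]_n).

Lemma sqnorm_ge0 v : 0 <= sqnorm v.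
Proof. by apply: sumr_ge0 => i _; exact: sqr_ge0. Qed.

Lemma sqnorm_eq0 v : sqnorm v = 0 -> v = 0.
Proof.
move=> /eqP; rewrite psumr_eq0; last by move=> i _; exact: sqr_ge0.
move=> /allP H; apply/matrixP => i j; rewrite (ord1 i) mxE.
have := H j (mem_index_enum j); rewrite /= sqrf_eq0 => /eqP //.
Qed.

Lemma sqnormZ t v : sqnorm (t *: v) = t ^+ 2 * sqnorm v.
Proof.
rewrite /sqnorm mulr_sumr; apply: eq_bigr => i _; by rewrite mxE exprMn.
Qed.

Lemma sqnorm_comb l a b :
  sqnorm (l *: a + (1 - l) *: b) =
  l * sqnorm a + (1 - l) * sqnorm b - l * (1 - l) * sqnorm (a - b).
Proof.
rewrite /sqnorm !mulr_sumr -big_split /= -sumrB; apply: eq_bigr => i _.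
rewrite !mxE; ring.
Qed.

Lemma combB l a b x :
  l *: a + (1 - l) *: b - x = l *: (a - x) + (1 - l) *: (b - x).
Proof. apply/matrixP => i j; rewrite !mxE; ring. Qed.

Lemma comb_shift x a t : x + t *: (a - x) = t *: a + (1 - t) *: x.
Proof. apply/matrixP => i j; rewrite !mxE; ring. Qed.

Lemma dotvD g a b : dotv g (a + b) = dotv g a + dotv g b.
Proof. by rewrite /dotv -big_split; apply: eq_bigr => i _; rewrite mxE mulrDr. Qed.

Lemma dotvZ g t a : dotv g (t *: a) = t * dotv g a.
Proof.
rewrite /dotv mulr_sumr; apply: eq_bigr => i _; rewrite mxE; ring.
Qed.

Lemma dotv0 (g : 'rV[R]_n) : dotv g 0 = 0.
Proof. by rewrite /dotv big1 // => i _; rewrite mxE mulr0. Qed.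

Lemma diff_dotv (f : 'rV[R]_n -> R) x v : 'd f x v = dotv (grad f x) v.
Proof.
rewrite {1}(row_sum_delta v) linear_sum /dotv; apply: eq_bigr => i _.
by rewrite linearZ /grad mxE mulrC.
Qed.

Lemma norm_le_sqnorm v : `|v| ^+ 2 <= sqnorm v.
Proof.
have -> : `|v| = mx_norm v by [].
have [->|] := eqVneq (mx_norm v) 0; first by rewrite expr0n /= sqnorm_ge0.
move=> /mx_norm_neq0 [[i k]] /= ->.
rewrite (ord1 i) real_normK ?num_real // /sqnorm (bigD1 k) //= lerDl.
by apply: sumr_ge0 => j _; exact: sqr_ge0.
Qed.

End Generic.

Section Generic2.
Context {R : realType} {n : nat}.

Lemma dir_near (f : 'rV[R]_n -> R) x d e : differentiable f x -> 0 < e ->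
  \forall t \near 0^'+, `|t^-1 * (f (x + t *: d) - f x) - dotv (grad f x) d| < e.
Proof.
move=> fx e0.
have hd : derivable f x d by exact: diff_derivable.
move/cvgr_dist_lt: hd => /(_ e e0) hc.
move: hc; rewrite -/(derive f x d) deriveE // diff_dotv.
move=> /nbhs_ballP[del del0 Hd]; apply/nbhs_ballP; exists del => // t Bt t0.
have := Hd t Bt (lt0r_neq0 t0).
by rewrite distrC /= [t *: d + x]addrC.
Qed.

Lemma nearR {P : R -> Prop} : (\forall t \near 0^'+, P t) ->
  exists2 d, 0 < d & forall t, 0 < t -> t < d -> P t.
Proof.
move=> /nbhs_ballP[d d0 Hd]; exists d => // t t0 td; apply: Hd => //.
by rewrite /ball /= sub0r normrN gtr0_norm.
Qed.

Lemma geo_small (q d : R) : 0 <= q -> q < 1 -> 0 < d ->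
  exists N, forall i, (N <= i)%N -> q ^+ i < d.
Proof.
move=> q0 q1 d0.
have hq : `|q| < 1 by rewrite ger0_norm.
move/cvgr_dist_lt: (cvg_expr hq) => /(_ d d0) [N _ HN].
exists N => i Ni; have := HN i Ni; rewrite /= sub0r normrN ger0_norm //.
exact: exprn_ge0.
Qed.


End Generic2.

Section Generic3.
Context {R : realType}.

Lemma cvg_maxr {T : Type} {F : set_system T} {FF : Filter F} {f g : T -> R} {a b : R} :
  f @ F --> a -> g @ F --> b ->
  (fun t => Num.max (f t) (g t)) @ F --> Num.max a b.
Proof.
move=> fa gb; rewrite maxr_absE.
under eq_fun do rewrite maxr_absE.
apply: cvgM; last exact: cvg_cst.
apply: cvgD; first exact: cvgD.
by apply: cvg_norm; exact: cvgB.
Qed.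

Lemma trial_pos (c : nat -> R) (t1 t2 : R) : 0 < t1 -> t2 < 1 ->
  (forall i, t1 <= c i <= t2) ->
  forall i, 0 < trial c i /\ trial c i <= t2 ^+ i /\ trial c i <= 1.
Proof.
move=> t10 t21 hc; elim=> [|i [p0 [p1 p2]]] /=; first by rewrite expr0 ltr01 lexx.
have /andP[c1 c2] := hc i.
have ci0 : 0 < c i by apply: lt_le_trans c1.
split; first exact: mulr_gt0.
split; first by rewrite exprS; apply: ler_pM => //; exact: ltW.
rewrite -[1]mulr1; apply: ler_pM => //; [exact: ltW|exact: ltW|].
by apply: le_trans c2 (ltW t21).
Qed.

End Generic3.

Section Generic4.
Context {R : realType} {n : nat}.

Lemma pick_small {d : R} : 0 < d -> exists t, [/\ 0 < t, t < d & t < 1].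
Proof.
move=> d0; exists (Num.min d 1 / 2).
have h0 : 0 < Num.min d 1 by rewrite lt_min d0 ltr01.
have h1 : Num.min d 1 <= d by rewrite ge_min lexx.
have h2 : Num.min d 1 <= 1 by rewrite ge_min lexx orbT.
split; lra.
Qed.

Lemma grad_ineq (f : 'rV[R]_n -> R) x y : differentiable f x -> convex_fun f ->
  dotv (grad f x) (y - x) <= f y - f x.
Proof.
move=> fx cf; apply/ler_addgt0Pr => e e0.
have [d d0 hd] := nearR (dir_near f x (y - x) e fx e0).
have [t [t0 td t1]] := pick_small d0.
have := hd t t0 td; rewrite ltr_norml => /andP[h1 _].
have cv := cf y x t.
rewrite -comb_shift in cv.
have h2 : t^-1 * (f (x + t *: (y - x)) - f x) <= f y - f x.
  rewrite ler_pdivrMl //.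
  have : 0 <= t <= 1 by rewrite (ltW t0) (ltW t1).
  move/cv; lra.
lra.
Qed.

End Generic4.

Section Dom.
Context {R : realType} {n m : nat} (G : 'I_m -> 'rV[R]_n -> R)
  (H : 'I_m -> 'rV[R]_n -> \bar R).
Hypothesis H_proper : forall j, proper_fun (H j).
Hypothesis H_convex : forall j, convex_efun (H j).
Local Notation D := (domF G H).

Definition hfin j u : R := fine (H j u).

Lemma Hfin j u : D u -> H j u \is a fin_num.
Proof.
move=> Du; have hn := (H_proper j).1 u; move: (Du j) hn; rewrite /Fobj.
by case: (H j u).
Qed.

Lemma HE j u : D u -> H j u = (hfin j u)%:E.
Proof. by move=> Du; rewrite /hfin fineK // Hfin. Qed.

Lemma notD u : ~ D u -> exists j, H j u = +oo%E.
Proof.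
move=> /existsNP [j Hj]; exists j; move: Hj; rewrite /Fobj.
have hn := (H_proper j).1 u; case: (H j u) hn => // r _.
by move=> /(_ (ltry _)).
Qed.

Lemma Dconv u v l : D u -> D v -> 0 < l < 1 ->
  D (l *: u + (1 - l) *: v) /\
  forall j, hfin j (l *: u + (1 - l) *: v) <= l * hfin j u + (1 - l) * hfin j v.
Proof.
move=> Du Dv l01.
have key j : (H j (l *: u + (1 - l) *: v) <= (l * hfin j u + (1 - l) * hfin j v)%:E)%E.
  by have := H_convex j u v l l01; rewrite (HE _ _ Du) (HE _ _ Dv).
have Dw : D (l *: u + (1 - l) *: v).
  move=> j; rewrite /Fobj; apply: lte_add_pinfty; first exact: ltry.
  exact: le_lt_trans (key j) (ltry _).
by split => // j; rewrite -lee_fin -(HE _ _ Dw).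
Qed.

Lemma Dseg x p t : D x -> D p -> 0 < t <= 1 -> D (x + t *: (p - x)).
Proof.
move=> Dx Dp /andP[t0 t1].
have [->|t1'] := eqVneq t 1; first by rewrite scale1r addrC subrK.
rewrite comb_shift; apply: (@Dconv p x t Dp Dx _).1.
by rewrite t0 lt_neqAle t1' t1.
Qed.

End Dom.

Section Prox.
Context {R : realType} {n m : nat} (G : 'I_m -> 'rV[R]_n -> R)
  (H : 'I_m -> 'rV[R]_n -> \bar R).
Hypothesis m_gt0 : (0 < m)%N.
Hypothesis H_proper : forall j, proper_fun (H j).
Hypothesis H_convex : forall j, convex_efun (H j).
Local Notation D := (domF G H).
Context (alpha : R) (alpha_gt0 : 0 < alpha) (x : 'rV[R]_n) (Dx : D x).

Let j0 : 'I_m := Ordinal m_gt0.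
Local Notation hh := (hfin H).
Let HE' := @HE R n m G H H_proper.
Let notD' := @notD R n m G H H_proper.
Let Dconv' := @Dconv R n m G H H_proper H_convex.
Let Dseg' := @Dseg R n m G H H_proper H_convex.

Definition aj j u := dotv (grad (G j) x) (u - x) + hh j u - hh j x.
Definition amax u := \big[Num.max/aj j0 u]_(j < m) aj j u.
Definition phi u := amax u + (2 * alpha)^-1 * sqnorm (u - x).

Lemma aj_le j u : aj j u <= amax u.
Proof. exact: le_bigmax. Qed.

Lemma aj_x j : aj j x = 0.
Proof. by rewrite /aj subrr dotv0 add0r subrr. Qed.

Lemma amax_x : amax x = 0.
Proof.
apply/eqP; rewrite eq_le; apply/andP; split.
  by apply: bigmax_le => [|j _]; rewrite aj_x.
by rewrite -(aj_x j0); exact: aj_le.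
Qed.

Lemma sqnorm0 : sqnorm (0 : 'rV[R]_n) = 0.
Proof. by rewrite /sqnorm big1 // => i _; rewrite mxE expr0n. Qed.

Lemma phi_x : phi x = 0.
Proof. by rewrite /phi amax_x subrr sqnorm0 mulr0 addr0. Qed.

Lemma psiE u : D u -> psi G H x u = (amax u)%:E.
Proof.
move=> Du.
have tE j : ((dotv (grad (G j) x) (u - x))%:E + H j u - H j x)%E = (aj j u)%:E.
  by rewrite (HE' _ _ Du) (HE' _ _ Dx).
rewrite /psi (eq_bigr _ (fun j _ => tE j)) /amax -EFin_bigmax.
apply/le_anti/andP; split; apply: bigmax_le => //.
- exact: leNye.
- by move=> j _; exact: le_bigmax.
- exact: le_bigmax.
- by move=> j _; exact: le_bigmax.
Qed.

Lemma POE u : D u -> prox_obj G H alpha x u = (phi u)%:E.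
Proof. by move=> Du; rewrite /prox_obj psiE. Qed.

Lemma PO_out u : ~ D u -> prox_obj G H alpha x u = +oo%E.
Proof.
move=> nDu; have [j Hj] := notD' _ nDu.
rewrite /prox_obj; suff -> : psi G H x u = +oo%E by [].
apply/eqP; rewrite -leye_eq /psi; apply: (bigmax_sup j) => //.
by rewrite Hj (HE' _ _ Dx).
Qed.


Lemma aj_conv j u v l : D u -> D v -> 0 < l < 1 ->
  aj j (l *: u + (1 - l) *: v) <= l * aj j u + (1 - l) * aj j v.
Proof.
move=> Du Dv l01; have [_ hc] := Dconv' _ _ _ Du Dv l01.
rewrite /aj combB dotvD !dotvZ; have := hc j; lra.
Qed.

Lemma amax_conv u v l : D u -> D v -> 0 < l < 1 ->
  amax (l *: u + (1 - l) *: v) <= l * amax u + (1 - l) * amax v.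
Proof.
move=> Du Dv /[dup] l01 /andP[l0 l1].
have h j : aj j (l *: u + (1 - l) *: v) <= l * amax u + (1 - l) * amax v.
  apply: le_trans (aj_conv j _ _ _ Du Dv l01) _.
  apply: lerD; apply: ler_wpM2l; try exact: aj_le.
    exact: ltW.
  by rewrite subr_ge0; exact: ltW.
by apply: bigmax_le => [|j _]; exact: h.
Qed.

Lemma phi_conv u v l : D u -> D v -> 0 < l < 1 ->
  phi (l *: u + (1 - l) *: v) <=
  l * phi u + (1 - l) * phi v - (2 * alpha)^-1 * (l * (1 - l)) * sqnorm (u - v).
Proof.
move=> Du Dv l01; have := amax_conv _ _ _ Du Dv l01.
rewrite /phi combB sqnorm_comb.
have -> : (u - x) - (v - x) = u - v by rewrite opprB addrA subrK.
lra.
Qed.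

Lemma dotv_cont (g : 'rV[R]_n) : continuous (fun v : 'rV[R]_n => dotv g (v - x)).
Proof.
move=> u; rewrite /dotv.
apply: (@cvg_big R 'I_n +%R 0 xpredT add_continuous _ (nbhs u)).
move=> i _.
have h1 : (fun v : 'rV[R]_n => (v - x) 0 i) @ nbhs u --> (u - x) 0 i.
  rewrite !mxE; under eq_fun do rewrite !mxE.
  exact: (cvgB (@coord_continuous R 1 n 0 i u) (cvg_cst (x 0 i))).
exact: (cvgM (cvg_cst (g 0 i)) h1).
Qed.


Lemma sqn_cont : continuous (fun v : 'rV[R]_n => sqnorm (v - x)).
Proof.
move=> u; rewrite /sqnorm.
apply: (@cvg_big R 'I_n +%R 0 xpredT add_continuous _ (nbhs u)).
move=> i _.
have h1 : (fun v : 'rV[R]_n => (v - x) 0 i) @ nbhs u --> (u - x) 0 i.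
  rewrite !mxE; under eq_fun do rewrite !mxE.
  exact: (cvgB (@coord_continuous R 1 n 0 i u) (cvg_cst (x 0 i))).
rewrite expr2; under eq_fun do rewrite expr2.
exact: (cvgM h1 h1).
Qed.

Hypothesis H_cont : forall j, {within edom (H j), continuous (H j)}.

Lemma within_of (f : 'rV[R]_n -> R) u : continuous f ->
  f @ within D (nbhs u) --> f u.
Proof. by move=> cf; apply: cvg_trans (cvg_app f (cvg_within D)) (cf u). Qed.

Lemma hh_cvg j u : D u -> hh j @ within D (nbhs u) --> hh j u.
Proof.
move=> Du.
have hc : {within D, continuous (H j)}.
  apply: continuous_subspaceW (H_cont j) => v Dv.
  by rewrite /edom /= (HE' _ _ Dv) ltry.
move/subspace_continuousP: hc => /(_ u Du) hc.
have e := HE' j u Du; rewrite /from_subspace e in hc.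
exact: (fine_cvg hc).
Qed.

Lemma aj_cvg j u : D u -> aj j @ within D (nbhs u) --> aj j u.
Proof.
move=> Du.
have h := cvgB (cvgD (within_of _ u (dotv_cont (grad (G j) x))) (hh_cvg j _ Du)) (cvg_cst (hh j x)).
exact: h.
Qed.

Lemma amax_cvg u : D u -> amax @ within D (nbhs u) --> amax u.
Proof.
move=> Du; rewrite /amax; elim: (index_enum _) => [|j s IH].
  rewrite big_nil; under eq_fun do rewrite big_nil.
  exact: aj_cvg.
rewrite big_cons /=; under eq_fun do rewrite big_cons /=.
have := cvg_maxr (aj_cvg j _ Du) IH.
exact.
Qed.

Lemma phi_cont : {within D, continuous phi}.
Proof.
apply/subspace_continuousP => u Du.
exact: (cvgD (amax_cvg _ Du) (cvgM (cvg_cst _) (within_of _ u sqn_cont))).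
Qed.


Hypothesis domF_closed : closed D.

Lemma Kcompact r : compact (D `&` closed_ball_ Num.norm x r).
Proof.
apply: bounded_closed_compact; last first.
  by apply: closedI; [exact: domF_closed | exact: closed_closed_ball_].
exists (r + `|x|); split; first exact: num_real.
move=> M HM y [_ /= Hy].
have : `|y| <= `|x| + `|x - y|.
  by rewrite -[y in `|y|](subKr x); exact: ler_normB.
rewrite /closed_ball_ /= in Hy.
move: HM Hy; lra.
Qed.

Lemma cont_sub (f : 'rV[R]_n -> R) r :
  {within D, continuous f} -> {within D `&` closed_ball_ Num.norm x r, continuous f}.
Proof. by apply: continuous_subspaceW; exact: subIsetl. Qed.

Lemma aj_cont j : {within D, continuous (aj j)}.
Proof. by apply/subspace_continuousP => u Du; exact: aj_cvg. Qed.

Lemma exist_min : exists2 p, D p & forall u, D u -> phi p <= phi u.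
Proof.
have Kx r : 0 <= r -> (D `&` closed_ball_ Num.norm x r) x.
  by move=> r0; split => //; rewrite /closed_ball_ /= subrr normr0.
have [w0 w0K1 w0min] := EVT_min_rV (ex_intro _ x (Kx 1 ler01)) (Kcompact 1)
  (cont_sub _ 1 (aj_cont j0)).
set M := aj j0 w0.
have M0 : M <= 0 by rewrite -(aj_x j0); apply: w0min; rewrite inE; exact: Kx.
have lowb u : D u -> 1 <= `|x - u| -> `|x - u| * M <= aj j0 u.
  move=> Du ru; set rho := `|x - u|.
  have rho0 : 0 < rho by apply: lt_le_trans ru.
  set l := rho^-1.
  have l0 : 0 < l by rewrite invr_gt0.
  have l1 : l <= 1 by rewrite invr_le1 // unitfE gt_eqF.
  have Dw : D (x + l *: (u - x)) by apply: Dseg' => //; rewrite l0 l1.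
  have wK : (D `&` closed_ball_ Num.norm x 1) (x + l *: (u - x)).
    split => //; rewrite /closed_ball_ /= opprD addrA subrr sub0r normrN normrZ.
    by rewrite gtr0_norm // distrC mulVf // gt_eqF.
  have Mw : M <= aj j0 (x + l *: (u - x)) by apply: w0min; rewrite inE.
  have awl : aj j0 (x + l *: (u - x)) <= l * aj j0 u.
    have [->|l1'] := eqVneq l 1; first by rewrite scale1r addrC subrK mul1r.
    rewrite comb_shift; have := aj_conv j0 _ _ l Du Dx.
    by rewrite aj_x mulr0 addr0; apply; rewrite l0 lt_neqAle l1' l1.
  have : M <= l * aj j0 u by apply: le_trans Mw awl.
  rewrite -(ler_pM2l rho0) mulrA mulfV ?gt_eqF // mul1r.
  by rewrite mulrC.
set k := (2 * alpha)^-1.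
have k0 : 0 < k by rewrite invr_gt0 mulr_gt0.
have hk : k * (2 * alpha) = 1 by rewrite mulVf // gt_eqF // mulr_gt0.
set r := 1 - 2 * alpha * M.
have r1 : 1 <= r.
  by rewrite /r lerDl oppr_ge0 pmulr_rle0 // mulr_gt0.
have [p pK pmin] := EVT_min_rV (ex_intro _ x (Kx r (le_trans ler01 r1)))
  (Kcompact r) (cont_sub _ r phi_cont).
have [Dp _] : (D `&` closed_ball_ Num.norm x r) p by rewrite -inE.
exists p => // u Du.
have [hr|hr] := leP `|x - u| r.
  by apply: pmin; rewrite inE; split.
have pp : phi p <= 0.
  by rewrite -phi_x; apply: pmin; rewrite inE; exact: Kx (le_trans ler01 r1).
apply: le_trans pp (ltW _).
set rho := `|x - u|.
have rho0 : 0 < rho by exact: lt_trans (lt_le_trans ltr01 r1) hr.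
have h1 : rho * M <= aj j0 u.
  by apply: lowb => //; apply: le_trans r1 (ltW hr).
have h2 : rho ^+ 2 <= sqnorm (u - x) by rewrite /rho distrC; exact: norm_le_sqnorm.
have e1 : k * r = k - M by rewrite /r mulrBr mulr1 mulrA hk mul1r.
have h3 : k * r < k * rho by rewrite ltr_pM2l.
have h4 : 0 < rho * (M + k * rho) by apply: mulr_gt0 => //; lra.
have h5 : aj j0 u <= amax u by exact: aj_le.
rewrite /phi -/k.
have h6 : k * rho ^+ 2 <= k * sqnorm (u - x) by rewrite ler_pM2l.
move: h4; rewrite expr2 in h6; lra.
Qed.

Lemma prox_in {p} : is_prox G H alpha x p -> D p.
Proof.
move=> hp; have [//|nDp] := pselect (D p).
by have := hp x; rewrite (PO_out _ nDp) (POE _ Dx) phi_x.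
Qed.

Lemma prox_min {p u} : is_prox G H alpha x p -> D u -> phi p <= phi u.
Proof.
move=> hp Du; have := hp u.
by rewrite (POE _ (prox_in hp)) (POE _ Du) lee_fin.
Qed.

Lemma prox_is p : D p -> (forall u, D u -> phi p <= phi u) -> is_prox G H alpha x p.
Proof.
move=> Dp hp u; rewrite (POE _ Dp).
have [Du|nDu] := pselect (D u); first by rewrite (POE _ Du) lee_fin; exact: hp.
by rewrite (PO_out _ nDu) leey.
Qed.

Lemma prox_uniq p q : is_prox G H alpha x p -> is_prox G H alpha x q -> q = p.
Proof.
move=> hp hq; have Dp := prox_in hp; have Dq := prox_in hq.
have e1 := prox_min hp Dq; have e2 := prox_min hq Dp.
set l : R := 2^-1.
have l01 : 0 < l < 1 by rewrite /l; apply/andP; split; lra.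
have [Dw _] := Dconv' _ _ _ Dp Dq l01.
have e3 := prox_min hp Dw.
have e4 := phi_conv _ _ _ Dp Dq l01.
have c0 : 0 < (2 * alpha)^-1 * (l * (1 - l)).
  by rewrite mulr_gt0 ?invr_gt0 ?mulr_gt0 // /l; lra.
have : (2 * alpha)^-1 * (l * (1 - l)) * sqnorm (p - q) <= 0 by rewrite /l in e4 *; lra.
rewrite pmulr_rle0 // => S0.
have /sqnorm_eq0 /eqP : sqnorm (p - q) = 0 by apply/le_anti; rewrite S0 sqnorm_ge0.
by rewrite subr_eq0 => /eqP ->.
Qed.


Hypothesis G_C1 : forall j, C1 (G j).
Hypothesis G_convex : forall j, convex_fun (G j).

Lemma theta0_wp p : is_prox G H alpha x p -> phi p = 0 -> weak_pareto G H x.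
Proof.
move=> hp p0 [x' hx'].
have Dx' : D x' by move=> j; exact: lt_trans (hx' j) (Dx j).
have bj j : G j x' + hh j x' - (G j x + hh j x) < 0.
  have := hx' j; rewrite /Fobj (HE' _ _ Dx') (HE' _ _ Dx) -!EFinD lte_fin; lra.
set B := \big[Num.max/(G j0 x' + hh j0 x' - (G j0 x + hh j0 x))]_(j < m)
           (G j x' + hh j x' - (G j x + hh j x)).
have B0 : B < 0 by apply/bigmax_ltP; split => [|j _]; exact: bj.
have ajx' j : aj j x' <= B.
  have gi := grad_ineq (G j) x x' ((G_C1 j).1 x) (G_convex j).
  apply: le_trans (le_bigmax _ _ j); rewrite /aj; lra.
set S := sqnorm (x' - x).
have S0 : 0 <= S := sqnorm_ge0 _.
set k := (2 * alpha)^-1.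
have k0 : 0 < k by rewrite invr_gt0 mulr_gt0.
have S1 : 0 < S + 1 by lra.
set del := - B / (k * (S + 1)).
have del0 : 0 < del by rewrite divr_gt0 ?mulr_gt0 // oppr_gt0.
have [t [t0 tdel t1]] := pick_small del0.
have t01 : 0 < t < 1 by rewrite t0 t1.
have Dt : D (x + t *: (x' - x)) by apply: Dseg' => //; rewrite t0 ltW.
have hamax : amax (x + t *: (x' - x)) <= t * B.
  apply: bigmax_le => [|j _]; rewrite comb_shift;
  (apply: le_trans (aj_conv _ _ _ _ Dx' Dx t01) _;
   rewrite aj_x mulr0 addr0 ler_pM2l //).
have hsq : sqnorm (x + t *: (x' - x) - x) = t ^+ 2 * S.
  by rewrite addrC addKr sqnormZ.
have e : k * del * (S + 1) = - B.
  rewrite /del; field; rewrite ?gt_eqF //; lra.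
have h1 : k * t * (S + 1) < k * del * (S + 1).
  by rewrite ltr_pM2r // ltr_pM2l.
have h2 : B + k * t * S < 0 by nra.
have h3 : t * (B + k * t * S) < 0 by rewrite pmulr_rlt0.
have h4 := prox_min hp Dt.
move: h4; rewrite p0 /phi hsq -/k; nra.
Qed.

Lemma wp_theta0 p : is_prox G H alpha x p -> weak_pareto G H x -> phi p = 0.
Proof.
move=> hp wp; have Dp := prox_in hp.
have pp : phi p <= 0 by rewrite -phi_x; exact: prox_min hp Dx.
apply/eqP; rewrite eq_le pp /= leNgt; apply/negP => pneg.
have ajn j : aj j p < 0.
  have := aj_le j p; have := sqnorm_ge0 (p - x).
  have k0 : 0 < (2 * alpha)^-1 by rewrite invr_gt0 mulr_gt0.
  move: pneg; rewrite /phi; nra.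
have hj j : \forall t \near 0^'+, `|t^-1 * (G j (x + t *: (p - x)) - G j x)
     - dotv (grad (G j) x) (p - x)| < - aj j p / 2.
  apply: dir_near; first exact: (G_C1 j).1.
  by rewrite divr_gt0 // oppr_gt0.
have := filter_forall (at_right_proper_filter 0) hj; move/nearR => [del del0 hdel].
have [t [t0 tdel t1]] := pick_small del0.
have t01 : 0 < t < 1 by rewrite t0 t1.
apply: wp; exists (x + t *: (p - x)) => j.
have Dt : D (x + t *: (p - x)) by apply: Dseg' => //; rewrite t0 ltW.
have hcv : hh j (x + t *: (p - x)) <= t * hh j p + (1 - t) * hh j x.
  by rewrite comb_shift; exact: (Dconv' _ _ _ Dp Dx t01).2.
have := hdel t t0 tdel j; rewrite ltr_norml => /andP[_ hG].
have hG' : G j (x + t *: (p - x)) - G j x <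
    t * (dotv (grad (G j) x) (p - x) + - aj j p / 2).
  by rewrite -ltr_pdivrMl //; lra.
have ta : t * aj j p < 0 by rewrite pmulr_rlt0.
rewrite /Fobj (HE' _ _ Dt) (HE' _ _ Dx) -!EFinD lte_fin.
move: ta hG'; rewrite /aj; nra.
Qed.


Lemma ls_term p (gamma tau1 tau2 : R) : 0 < gamma -> 0 < tau1 -> tau2 < 1 ->
  is_prox G H alpha x p -> phi p != 0 ->
  forall (jstar : 'I_m) (c : nat -> R), (forall i, tau1 <= c i <= tau2) ->
  linesearch_terminates G H gamma x (p - x) jstar c.
Proof.
move=> g0 t10 t21 hp pn0 jstar c hc.
have Dp := prox_in hp.
have pnx : p != x by apply: contraNneq pn0 => ->; rewrite phi_x.
have S0 : 0 < sqnorm (p - x).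
  rewrite lt_neqAle sqnorm_ge0 andbT; apply/eqP => /esym /sqnorm_eq0 /eqP.
  by rewrite subr_eq0; apply/negP.
have hj j : \forall t \near 0^'+, armijo G gamma x (p - x) j t.
  have e0 : 0 < gamma / 2 * sqnorm (p - x) by rewrite mulr_gt0 ?divr_gt0.
  move: (nbhs_right_gt (0:R)) (dir_near (G j) x (p - x) _ ((G_C1 j).1 x) e0).
  apply: filterS2 => t t0; rewrite ltr_norml => /andP[_ h].
  have h' : G j (x + t *: (p - x)) - G j x <
      t * (dotv (grad (G j) x) (p - x) + gamma / 2 * sqnorm (p - x)).
    by rewrite -ltr_pdivrMl //; lra.
  rewrite /armijo; move: h'; lra.
have := filter_forall (at_right_proper_filter 0) hj; move/nearR => [del del0 hdel].
have tau20 : 0 <= tau2.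
  by have /andP[a b] := hc 0%N; apply: le_trans b; apply: le_trans a; exact: ltW.
have [N hN] := geo_small tau2 del tau20 t21 del0.
have tr := trial_pos c tau1 tau2 t10 t21 hc.
have big i : (N <= i)%N -> forall j, armijo G gamma x (p - x) j (trial c i).
  move=> Ni j; have [tp [tq _]] := tr i; apply: hdel => //.
  exact: le_lt_trans tq (hN i Ni).
have Dti i : domF G H (x + trial c i *: (p - x)).
  have [tp [_ t1]] := tr i; apply: Dseg' => //; by rewrite tp t1.
pose P1 : pred nat := fun i => `[< armijo G gamma x (p - x) jstar (trial c i) >].
have exP1 : exists i, P1 i by exists N; apply/asboolP; exact: big.
case: (ex_minnP exP1) => i1 /asboolP Pi1 mini1.
rewrite /linesearch_terminates; exists i1; split => //; split.
  move=> i ii1 hi; have := mini1 i (asboolT hi); by rewrite leqNgt ii1.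
have [hF|hF] := pselect (Fdecrease G H x (p - x) (trial c i1)).
  by left; split.
right; split => //.
pose P2 : pred nat := fun i => (i1 < i)%N &&
  `[< forall j, armijo G gamma x (p - x) j (trial c i) >].
have exP2 : exists i, P2 i.
  exists (maxn N i1.+1); apply/andP; split; first by rewrite leq_max ltnSn orbT.
  by apply/asboolP; apply: big; rewrite leq_maxl.
case: (ex_minnP exP2) => i2 /andP[i12 /asboolP Pi2] mini2.
exists i2; split => //; split => //; split => //.
move=> i /andP[i1i ii2] hi.
have := mini2 i; rewrite /P2 i1i (asboolT hi) => /(_ isT).
by rewrite leqNgt ii2.
Qed.

End Prox.
Theorem mainTheorem1 (R : realType) (n m : nat)
  (G : 'I_m -> 'rV[R]_n -> R) (H : 'I_m -> 'rV[R]_n -> \bar R)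
  (m_gt0 : (0 < m)%N)
  (G_C1 : forall j, C1 (G j))
  (G_convex : forall j, convex_fun (G j))
  (H_proper : forall j, proper_fun (H j))
  (H_convex : forall j, convex_efun (H j))
  (H_cont : forall j, {within edom (H j), continuous (H j)})
  (domF_ne : domF G H !=set0)
  (domF_closed : closed (domF G H))
  (alpha gamma tau1 tau2 : R)
  (alpha_gt0 : 0 < alpha) (gamma_gt0 : 0 < gamma) (gamma_lt : gamma < 2 / alpha)
  (tau1_gt0 : 0 < tau1) (tau12 : tau1 < tau2) (tau2_lt1 : tau2 < 1) :
  forall x : 'rV[R]_n, domF G H x ->
    (* Step 1 is well defined: p_alpha(x) exists and is unique *)
    (exists p, is_prox G H alpha x p /\ forall q, is_prox G H alpha x q -> q = p) /\
    (forall p, is_prox G H alpha x p ->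
       (* the algorithm stops at x iff x is weakly Pareto optimal *)
       ((theta G H alpha x p = 0%E <-> weak_pareto G H x) /\
       (* if it does not stop, the line search of Step 3 terminates,
          whatever admissible trial step sizes are chosen *)
        (theta G H alpha x p != 0%E ->
         forall jstar : 'I_m,
           (forall j, dotv (grad (G j) x) (p - x) <= dotv (grad (G jstar) x) (p - x)) ->
           forall c : nat -> R, (forall i, tau1 <= c i <= tau2) ->
             linesearch_terminates G H gamma x (p - x) jstar c))).
Proof.
move=> x Dx.
have [p Dp pmin] := exist_min G H m_gt0 H_proper H_convex alpha alpha_gt0 x Dx H_cont domF_closed.
have hp := prox_is G H m_gt0 H_proper alpha x Dx p Dp pmin.
split.
  exists p; split => // q hq.
  exact: (prox_uniq G H m_gt0 H_proper H_convex alpha alpha_gt0 x Dx p q hp hq).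
move=> q hq.
have Dq := prox_in G H m_gt0 H_proper alpha x Dx hq.
have thE : theta G H alpha x q = (phi G H m_gt0 alpha x q)%:E.
  by rewrite /theta (POE G H m_gt0 H_proper alpha x Dx q Dq).
split; [split|].
- move=> /eqP; rewrite thE eqe => /eqP h.
  exact: (theta0_wp G H m_gt0 H_proper H_convex alpha alpha_gt0 x Dx G_C1 G_convex q hq h).
- move=> wp; rewrite thE (wp_theta0 G H m_gt0 H_proper H_convex alpha alpha_gt0 x Dx G_C1 q hq wp) //.
- move=> hne jstar _ c hc.
  apply: (ls_term G H m_gt0 H_proper H_convex alpha x Dx G_C1 q gamma tau1 tau2) => //.
  by apply: contraNneq hne => h; rewrite thE h.
Qed.
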